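(* The Sex-Equal matching mechanism $SE$ and the Egalitarian Stable matching mechanism $ES$ are symmetric (i.e. $G^*$-symmetric).
   Context: Fix $n\ge 2$, $W=\{1,\dots,n\}$, $M=\{n+1,\dots,2n\}$, $I=W\cup M$. Permutations compose right-to-left. A preference profile is a function $p$ on $I$ assigning to each $x\in W$ a linear order $p(x)$ on $M$ and to each $y\in M$ a linear order $p(y)$ on $W$; $\mathcal{P}$ is the set of preference profiles. For a linear order $R$ on $X$ and $a\in X$, $\mathrm{Rank}_R(a)=|\{b\in X:b\succeq_R a\}|$. A matching is a permutation $\mu$ of $I$ with $\mu(W)=M$, $\mu(M)=W$, $\mu(\mu(z))=z$; $\mathcal{M}$ is the set of matchings. $\mu$ is stable for $p$ if there is no $(x,y)\in W\times M$ with $y\succ_{p(x)}\mu(x)$ and $x\succ_{p(y)}\mu(y)$; $ST(p)$ is the set of matchings stable for $p$. Let $\delta(p,\mu)=\left|\sum_{x\in W}\mathrm{Rank}_{p(x)}(\mu(x))-\sum_{y\in M}\mathrm{Rank}_{p(y)}(\mu(y))\right|$ and $e(p,\mu)=\sum_{x\in W}\mathrm{Rank}_{p(x)}(\mu(x))+\sum_{y\in M}\mathrm{Rank}_{p(y)}(\mu(y))$. $SE(p)=\arg\min_{\mu\in ST(p)}\delta(p,\mu)$ and $ES(p)=\arg\min_{\mu\in ST(p)}e(p,\mu)$. $G^*=\{\varphi\in\mathrm{Sym}(I):\{\varphi(W),\varphi(M)\}=\{W,M\}\}$. For a linear order $R$ on $X\subseteq I$ and $\varphi\in\mathrm{Sym}(I)$,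 $\varphi R$ is the relation on $\varphi(X)$ with $(a,b)\in\varphi R$ iff $(\varphi^{-1}(a),\varphi^{-1}(b))\in R$. For $\varphi\in G^*$, $p^\varphi(z)=\varphi\,p(\varphi^{-1}(z))$; $\mu^\varphi=\varphi\mu\varphi^{-1}$; $S^\varphi=\{\mu^\varphi:\mu\in S\}$. A matching mechanism (correspondence $F$ from $\mathcal{P}$ to $\mathcal{M}$) is symmetric if $F(p^\varphi)=F(p)^\varphi$ for all $p\in\mathcal{P}$, $\varphi\in G^*$. *)

(* Defs.v *)
From mathcomp Require Import all_boot all_order all_fingroup all_algebra.
Set Implicit Arguments. Unset Strict Implicit. Unset Printing Implicit Defensive.
Import GRing.Theory Num.Theory.

(* Agents: I = 'I_(n+n); W = {0,...,n-1} (paper's 1..n), M = {n,...,2n-1}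
   (paper's n+1..2n).  0-based shift of the paper's labels. *)
Section Matching.
Variable n : nat.
Definition agent := 'I_(n + n).
Definition Wset : {set agent} := [set i : agent | (i < n)%N].
Definition Mset : {set agent} := [set i : agent | (n <= i)%N].

(* A (reflexive, "weak") linear order on X, as a boolean relation on I whose
   field is exactly X.  (a,b) \in R  is written  R a b  and means a >=_R b. *)
Definition linear_order_on (X : {set agent}) (R : rel agent) : Prop :=
  [/\ (forall a b, R a b -> (a \in X) && (b \in X)),
      (forall a, a \in X -> R a a),
      (forall a b, R a b -> R b a -> a = b),
      (forall a b c, R a b -> R b c -> R a c)
    & (forall a b, a \in X -> b \in X -> R a b || R b a)].

Definition strict (R : rel agent) (a b : agent) : bool := R a b && (a != b).

Definition Rank (R : rel agent) (a : agent) : nat := #|[set b | R b a]|.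

Definition profile := agent -> rel agent.
Definition is_profile (p : profile) : Prop :=
  (forall x, x \in Wset -> linear_order_on Mset (p x)) /\
  (forall y, y \in Mset -> linear_order_on Wset (p y)).

Definition is_matching (mu : {perm agent}) : bool :=
  [&& mu @: Wset == Mset, mu @: Mset == Wset & [forall z, mu (mu z) == z]].

Definition is_stable (p : profile) (mu : {perm agent}) : bool :=
  ~~ [exists x in Wset, exists y in Mset,
        strict (p x) y (mu x) && strict (p y) x (mu y)].

Definition ST (p : profile) : {set {perm agent}} :=
  [set mu | is_matching mu && is_stable p mu].

Definition sumW (p : profile) (mu : {perm agent}) : nat :=
  \sum_(x in Wset) Rank (p x) (mu x).
Definition sumM (p : profile) (mu : {perm agent}) : nat :=
  \sum_(y in Mset) Rank (p y) (mu y).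

Definition delta (p : profile) (mu : {perm agent}) : nat :=
  absz (Posz (sumW p mu) - Posz (sumM p mu))%R.
Definition egal (p : profile) (mu : {perm agent}) : nat :=
  sumW p mu + sumM p mu.

Definition argmin_ST (f : {perm agent} -> nat) (p : profile) : {set {perm agent}} :=
  [set mu in ST p | [forall nu in ST p, f mu <= f nu]].

Definition SE (p : profile) : {set {perm agent}} := argmin_ST (delta p) p.
Definition ES (p : profile) : {set {perm agent}} := argmin_ST (egal p) p.

Definition in_Gstar (phi : {perm agent}) : bool :=
  [set phi @: Wset; phi @: Mset] == [set Wset; Mset].

Definition act_rel (phi : {perm agent}) (R : rel agent) : rel agent :=
  fun a b => R ((phi^-1)%g a) ((phi^-1)%g b).

Definition act_profile (phi : {perm agent}) (p : profile) : profile :=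
  fun z => act_rel phi (p ((phi^-1)%g z)).

(* mu^phi = phi o mu o phi^-1 (right-to-left composition), i.e. the map
   z |-> phi (mu (phi^-1 z)); in mathcomp's left-to-right perm product this
   is phi^-1 * mu * phi. *)
Definition act_matching (phi mu : {perm agent}) : {perm agent} :=
  (phi^-1 * mu * phi)%g.

Definition act_set (phi : {perm agent}) (S : {set {perm agent}}) :
  {set {perm agent}} := [set act_matching phi mu | mu in S].

Definition symmetric_mech (F : profile -> {set {perm agent}}) : Prop :=
  forall (p : profile) (phi : {perm agent}),
    is_profile p -> in_Gstar phi -> F (act_profile phi p) = act_set phi (F p).

Lemma act_matching_apply (phi mu : {perm agent}) z :
  act_matching phi mu z = phi (mu ((phi^-1)%g z)).
Proof. by rewrite /act_matching !permM. Qed.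
End Matching.

(* Main.v *)
Require Import Defs.
From mathcomp Require Import all_boot all_order all_fingroup all_algebra.
Set Implicit Arguments. Unset Strict Implicit. Unset Printing Implicit Defensive.

Section Helpers.
Variable n : nat.
Local Notation W := (@Wset n).
Local Notation M := (@Mset n).

Lemma inM (z : agent n) : (z \in M) = ~~ (z \in W).
Proof. by rewrite !inE leqNgt. Qed.

Lemma Gstar_case (hn : (0 < n)%N) (phi : {perm agent n}) :
  in_Gstar phi -> exists s : bool, forall x, (phi x \in W) = s (+) (x \in W).
Proof.
move/eqP=> H.
have hW : phi @: W \in [set W; M] by rewrite -H !inE eqxx.
have hM : phi @: M \in [set W; M] by rewrite -H !inE eqxx orbT.
case/set2P: hW => E.
  exists false => x; by rewrite -{1}E mem_imset //; apply: perm_inj.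
exists true => x.
case/set2P: hM => E'.
  by rewrite -{1}E' mem_imset ?inM //; apply: perm_inj.
exfalso.
have WM : W = M.
  apply/setP => z; rewrite -(mem_imset _ z (@perm_inj _ phi)) E -{1}E'.
  by rewrite (mem_imset _ z (@perm_inj _ phi)).
have hz : (0 < n + n)%N by rewrite addn_gt0 hn.
move/setP: WM => /(_ (Ordinal hz)); rewrite !inE /= hn.
by case: n hn.
Qed.

Variable phi : {perm agent n}.
Variable s : bool.
Hypothesis Hs : forall x, (phi x \in W) = s (+) (x \in W).

Lemma HsV x : ((phi^-1)%g x \in W) = s (+) (x \in W).
Proof. by rewrite -{2}(permKV phi x) Hs addbA addbb. Qed.

Lemma HsM x : (phi x \in M) = s (+) (x \in M).
Proof. by rewrite !inM Hs addbN. Qed.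

Lemma HsVM x : ((phi^-1)%g x \in M) = s (+) (x \in M).
Proof. by rewrite !inM HsV addbN. Qed.

Lemma RankE (R : rel (agent n)) a : Rank (act_rel phi R) (phi a) = Rank R a.
Proof.
rewrite /Rank /act_rel permK.
have -> : [set b | R ((phi^-1)%g b) a] = phi @: [set c | R c a].
  apply/setP => z; rewrite -{2}(permKV phi z) mem_imset ?inE //; exact: perm_inj.
by rewrite card_imset //; exact: perm_inj.
Qed.

Lemma sumW_act p mu :
  sumW (act_profile phi p) (act_matching phi mu) = if s then sumM p mu else sumW p mu.
Proof.
rewrite /sumW /sumM (reindex_inj (@perm_inj _ phi)) /=.
case: s Hs => Hs'.
  apply: eq_big => y; first by rewrite Hs' inM.
  by move=> _; rewrite /act_profile act_matching_apply !permK RankE.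
apply: eq_big => y; first by rewrite Hs'.
by move=> _; rewrite /act_profile act_matching_apply !permK RankE.
Qed.

Lemma sumM_act p mu :
  sumM (act_profile phi p) (act_matching phi mu) = if s then sumW p mu else sumM p mu.
Proof.
rewrite /sumW /sumM (reindex_inj (@perm_inj _ phi)) /=.
case: s HsM => Hs'.
  apply: eq_big => y; first by rewrite Hs' inM /= negbK.
  by move=> _; rewrite /act_profile act_matching_apply !permK RankE.
apply: eq_big => y; first by rewrite Hs'.
by move=> _; rewrite /act_profile act_matching_apply !permK RankE.
Qed.

Lemma delta_act p mu :
  delta (act_profile phi p) (act_matching phi mu) = delta p mu.
Proof. rewrite /delta sumW_act sumM_act; case: s => //; exact: distnC. Qed.

Lemma egal_act p mu :
  egal (act_profile phi p) (act_matching phi mu) = egal p mu.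
Proof. rewrite /egal sumW_act sumM_act; case: s => //; exact: addnC. Qed.

Lemma imset_eq_pt (mu : {perm agent n}) (A B : {set agent n}) :
  (mu @: A == B) = [forall x, (mu x \in B) == (x \in A)].
Proof.
apply/eqP/forallP => [<- x | H].
  by rewrite mem_imset //; exact: perm_inj.
apply/setP => z; rewrite -(permKV mu z) mem_imset; last exact: perm_inj.
by rewrite (eqP (H _)).
Qed.

Lemma matching_act mu : is_matching (act_matching phi mu) = is_matching mu.
Proof.
rewrite /is_matching !imset_eq_pt.
have E1 : [forall x, (act_matching phi mu x \in M) == (x \in W)] =
          [forall x, (mu x \in M) == (x \in W)].
  apply/forallP/forallP => H x.
    move: (H (phi x)); rewrite act_matching_apply permK HsM Hs.
    by case: s; case: (_ \in _); case: (_ \in _).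
  rewrite act_matching_apply HsM (eqP (H _)) HsV.
  by case: s; case: (_ \in _).
have E2 : [forall x, (act_matching phi mu x \in W) == (x \in M)] =
          [forall x, (mu x \in W) == (x \in M)].
  apply/forallP/forallP => H x.
    move: (H (phi x)); rewrite act_matching_apply permK HsM Hs.
    by case: s; case: (_ \in _); case: (_ \in _).
  rewrite act_matching_apply Hs (eqP (H _)) HsVM.
  by case: s; case: (_ \in _).
have E3 : [forall z, act_matching phi mu (act_matching phi mu z) == z] =
          [forall z, mu (mu z) == z].
  apply/forallP/forallP => H z.
    move: (H (phi z)); rewrite !act_matching_apply !permK (inj_eq (@perm_inj _ phi)).
    done.
  rewrite !act_matching_apply !permK (eqP (H _)) permKV //.
by rewrite E1 E2 E3.
Qed.

Definition Bl (p : profile n) (mu : {perm agent n}) x y :=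
  strict (p x) y (mu x) && strict (p y) x (mu y).

Lemma Bl_act p mu x y :
  Bl (act_profile phi p) (act_matching phi mu) (phi x) (phi y) = Bl p mu x y.
Proof.
rewrite /Bl /strict /act_profile /act_rel !act_matching_apply !permK.
by rewrite !(inj_eq (@perm_inj _ phi)).
Qed.

Lemma Bl_sym p mu x y : Bl p mu x y = Bl p mu y x.
Proof. by rewrite /Bl andbC. Qed.

Lemma stable_act p mu :
  is_stable (act_profile phi p) (act_matching phi mu) = is_stable p mu.
Proof.
rewrite /is_stable; congr negb.
apply/idP/idP.
  case/existsP => x /andP [xW /existsP [y /andP [yM B]]].
  have B' : Bl p mu ((phi^-1)%g x) ((phi^-1)%g y) by rewrite -Bl_act !permKV.
  move: (HsV x) (HsVM y); rewrite xW yM; case: s => /= xW' yM'.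
    have yW0 : (phi^-1)%g y \in W by rewrite -[_ \in W]negbK -inM yM'.
    have xM0 : (phi^-1)%g x \in M by rewrite inM xW'.
    apply/existsP; exists ((phi^-1)%g y); rewrite yW0 /=.
    apply/existsP; exists ((phi^-1)%g x); rewrite xM0 /=.
    rewrite Bl_sym in B'; exact B'.
  apply/existsP; exists ((phi^-1)%g x); rewrite xW' /=.
  by apply/existsP; exists ((phi^-1)%g y); rewrite yM'.
case/existsP => x /andP [xW /existsP [y /andP [yM B]]].
case: s Hs HsM => Hs' HsM'.
  apply/existsP; exists (phi y); rewrite Hs' /= -inM yM /=.
  apply/existsP; exists (phi x); rewrite HsM' inM xW /=.
  by rewrite -[_ && _]/(Bl _ _ _ _) Bl_act Bl_sym.
apply/existsP; exists (phi x); rewrite Hs' xW /=.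
apply/existsP; exists (phi y); rewrite HsM' yM /=.
by rewrite -[_ && _]/(Bl _ _ _ _) Bl_act.
Qed.

End Helpers.

Section Main.
Variable n : nat.

Lemma act_matchingK (phi : {perm agent n}) :
  cancel (act_matching phi) (act_matching (phi^-1)%g).
Proof.
move=> mu; apply/permP => z.
by rewrite !act_matching_apply invgK !permK.
Qed.

Lemma act_matchingKV (phi : {perm agent n}) :
  cancel (act_matching (phi^-1)%g) (act_matching phi).
Proof.
move=> mu; apply/permP => z.
by rewrite !act_matching_apply invgK !permKV.
Qed.

Lemma argmin_act (phi : {perm agent n}) (p p' : profile n)
  (f f' : profile n -> {perm agent n} -> nat) :
  (forall mu, (act_matching phi mu \in ST p') = (mu \in ST p)) ->
  (forall mu, f' p' (act_matching phi mu) = f p mu) ->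
  argmin_ST (f' p') p' = act_set phi (argmin_ST (f p) p).
Proof.
move=> HST Hf; apply/setP => nu.
rewrite -(act_matchingKV phi nu).
set mu := act_matching _ nu.
rewrite /act_set mem_imset; last exact: can_inj (@act_matchingK phi).
rewrite [X in X = _]inE [X in _ = X]inE HST Hf; congr andb.
apply/forallP/forallP => H x.
  by move: (H (act_matching phi x)); rewrite HST Hf.
rewrite -(act_matchingKV phi x) HST Hf; exact: H.
Qed.

End Main.

Theorem proposition10 (n : nat) (hn : (2 <= n)%N) :
  symmetric_mech (@SE n) /\ symmetric_mech (@ES n).
Proof.
have hn0 : (0 < n)%N by apply: leq_trans hn.
have HST : forall p (phi : {perm agent n}) s,
    (forall x, (phi x \in Wset n) = s (+) (x \in Wset n)) ->
    forall mu, (act_matching phi mu \in ST (act_profile phi p)) = (mu \in ST p).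
  by move=> p phi s Hs mu; rewrite !inE (matching_act Hs) (stable_act Hs).
split=> p phi _ /(Gstar_case hn0) [s Hs].
  apply: (argmin_act (f:=@delta n) (f':=@delta n)); first exact: HST Hs.
  by move=> mu; apply: delta_act.
apply: (argmin_act (f:=@egal n) (f':=@egal n)); first exact: HST Hs.
by move=> mu; apply: egal_act.
Qed.
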